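(* Let $\rho$ be a locally absolutely continuous function quasi-norm with the Fatou property over a $\sigma$-finite measure space $(\Omega,\Sigma,\mu)$, and let $(\Theta,\mathcal{T},\nu)$ be another $\sigma$-finite measure space. Let $f\colon\Omega\times\Theta\to[0,\infty]$ and $g\colon\Theta\times\Omega\to[0,\infty]$ be measurable with respect to the product $\sigma$-algebras. Then the functions $\Theta\to[0,\infty]$ given by $\theta\mapsto\rho(f(\cdot,\theta))$ and $\theta\mapsto\rho(g(\theta,\cdot))$ are measurable.
   Context: $L_0^+(\mu)$: measurable functions $\Omega\to[0,\infty]$ modulo a.e. equality. A function quasi-norm is $\rho\colon L_0^+(\mu)\to[0,\infty]$ with (F1) $\rho(tf)=t\rho(f)$, $t\ge0$; (F2) $f\le g$ a.e. $\Rightarrow\rho(f)\le\rho(g)$; (F3) $\rho(\chi_E)<\infty$ if $\mu(E)<\infty$; (F4) for all $E$ with $\mu(E)<\infty$ and $\varepsilon>0$ there is $\delta>0$ with $\mu(A)\le\varepsilon$ whenever $A\subseteq E$ measurable and $\rho(\chi_A)\le\delta$; (F5) $\rho(f+g)\le\kappa(\rho(f)+\rho(g))$. Fatou property: $\rho(\lim f_n)\le\lim\rho(f_n)$ for non-decreasing $(f_n)$. $h\in L_0^+(\mu)$ with $\rho(h)<\infty$ is absolutely continuous if $\lim_n\rho(f_n)=\rho(\lim_nf_n)$ for every non-increasing $(f_n)$ in $L_0^+(\mu)$ with $f_1\le h$; $\rho$ is locally absolutely continuous if $\chi_E$ is absolutely continuous for every $E\in\Sigma$ with $\mu(E)<\infty$.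 *)

(* Defs.v *)
From HB Require Import structures.
From mathcomp Require Import all_boot all_order all_algebra.
From mathcomp Require Import all_classical all_reals all_analysis measurable_realfun.
Set Implicit Arguments. Unset Strict Implicit. Unset Printing Implicit Defensive.
Import Order.TTheory GRing.Theory Num.Theory.
Local Open Scope classical_set_scope.
Local Open Scope ring_scope.
Local Open Scope ereal_scope.

Section FQN.
Context {d : measure_display} {T : measurableType d} {R : realType}.
Variable mu : {measure set T -> \bar R}.

(* L_0^+(mu): measurable functions T -> [0,+oo]; a.e.-classes are handled by
   requiring rho to be invariant under a.e. equality. *)
Definition L0p (f : T -> \bar R) : Prop :=
  measurable_fun setT f /\ (forall x, 0 <= f x).

Definition eindic (E : set T) : T -> \bar R := fun x => (\1_E x)%:E.

Definition is_function_quasinorm (rho : (T -> \bar R) -> \bar R) : Prop :=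
  (forall f g, L0p f -> L0p g -> {ae mu, forall x, f x = g x} -> rho f = rho g) /\
  (forall f, L0p f -> 0 <= rho f) /\
  (forall (t : R) f, (0 <= t)%R -> L0p f ->
      rho (fun x => t%:E * f x) = t%:E * rho f) /\
  (forall f g, L0p f -> L0p g -> {ae mu, forall x, f x <= g x} -> rho f <= rho g) /\
  (forall E, measurable E -> mu E < +oo -> rho (eindic E) < +oo) /\
  (forall E, measurable E -> mu E < +oo -> forall eps : R, (0 < eps)%R ->
      exists delta : R, (0 < delta)%R /\
        forall A, measurable A -> A `<=` E -> rho (eindic A) <= delta%:E ->
          mu A <= eps%:E) /\
  (exists kappa : R, (1 <= kappa)%R /\
     forall f g, L0p f -> L0p g ->
       rho (fun x => f x + g x) <= kappa%:E * (rho f + rho g)).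

Definition has_Fatou (rho : (T -> \bar R) -> \bar R) : Prop :=
  forall F : nat -> T -> \bar R, (forall n, L0p (F n)) ->
    (forall x, {homo (fun n => F n x) : n m / (n <= m)%N >-> n <= m}) ->
    rho (fun x => limn (fun n => F n x)) <= limn (fun n => rho (F n)).

Definition abs_cont (rho : (T -> \bar R) -> \bar R) (h : T -> \bar R) : Prop :=
  rho h < +oo /\
  forall F : nat -> T -> \bar R, (forall n, L0p (F n)) ->
    (forall x, {homo (fun n => F n x) : n m / (n <= m)%N >-> m <= n}) ->
    {ae mu, forall x, F 0%N x <= h x} ->
    limn (fun n => rho (F n)) = rho (fun x => limn (fun n => F n x)).

Definition loc_abs_cont (rho : (T -> \bar R) -> \bar R) : Prop :=
  forall E, measurable E -> mu E < +oo -> abs_cont rho (eindic E).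

End FQN.

(* Main.v *)
Require Import Defs.
From HB Require Import structures.
From mathcomp Require Import all_boot all_order all_algebra.
From mathcomp Require Import all_classical all_reals all_analysis measurable_realfun.
From mathcomp Require Import ring lra.
Import Order.TTheory GRing.Theory Num.Theory HBNNSimple.
Local Open Scope classical_set_scope.
Local Open Scope ring_scope.
Local Open Scope ereal_scope.

Section RhoLim.
Context (R : realType) (d1 : measure_display) (Omega : measurableType d1)
  (mu : {measure set Omega -> \bar R}) (rho : (Omega -> \bar R) -> \bar R).
Hypothesis Hq : is_function_quasinorm mu rho.
Hypothesis HF : has_Fatou rho.
Hypothesis Hac : loc_abs_cont mu rho.

Lemma rho_mono (f g : Omega -> \bar R) : L0p f -> L0p g ->
  (forall x, f x <= g x) -> rho f <= rho g.
Proof.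
move=> Lf Lg fg; case: Hq => _ [_ [_ [H _]]].
by apply: H => //; exact: aeW.
Qed.

Lemma rho_nd_lim (F : nat -> Omega -> \bar R) (G : Omega -> \bar R) :
  (forall n, L0p (F n)) -> L0p G ->
  (forall x, {homo (fun n => F n x) : n m / (n <= m)%N >-> n <= m}) ->
  (forall x, (fun n => F n x) @ \oo --> G x) ->
  (fun n => rho (F n)) @ \oo --> rho G.
Proof.
move=> LF LG ndF cF.
have ndr : {homo (fun n => rho (F n)) : n m / (n <= m)%N >-> n <= m}.
  by move=> n m nm; apply: rho_mono => // x; exact: ndF.
have Gl : (fun x => limn (fun n => F n x)) = G.
  by apply: funext => x; exact: cvg_lim.
suff <- : limn (fun n => rho (F n)) = rho G by exact: ereal_nondecreasing_is_cvgn.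
apply/eqP; rewrite eq_le; apply/andP; split.
  apply: lime_le; first exact: ereal_nondecreasing_is_cvgn.
  apply: nearW => n; apply: rho_mono => // x; rewrite -Gl.
  apply: lime_ge; first exact: ereal_nondecreasing_is_cvgn.
  by near=> m; apply: ndF; near: m; exists n.
by rewrite -{1}Gl; exact: HF.
Unshelve. all: by end_near.
Qed.

Lemma rho_ni_lim (E : set Omega) (F : nat -> Omega -> \bar R) (G : Omega -> \bar R) :
  measurable E -> mu E < +oo ->
  (forall n, L0p (F n)) -> L0p G ->
  (forall x, {homo (fun n => F n x) : n m / (n <= m)%N >-> m <= n}) ->
  (forall x, F 0%N x <= eindic E x) ->
  (forall x, (fun n => F n x) @ \oo --> G x) ->
  (fun n => rho (F n)) @ \oo --> rho G.
Proof.
move=> mE muE LF LG niF F0 cF.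
have nir : {homo (fun n => rho (F n)) : n m / (n <= m)%N >-> m <= n}.
  by move=> n m nm; apply: rho_mono => // x; exact: niF.
have Gl : (fun x => limn (fun n => F n x)) = G.
  by apply: funext => x; exact: cvg_lim.
have [_ ac] := Hac E mE muE.
have := ac F LF niF (aeW _ F0); rewrite Gl => <-.
exact: ereal_nonincreasing_is_cvgn.
Qed.

End RhoLim.
Arguments rho_nd_lim {R d1 Omega mu rho} Hq HF {F G}.
Arguments rho_ni_lim {R d1 Omega mu rho} Hq Hac {E F G}.
Section Rect.
Context (d1 d2 : measure_display) (Omega : measurableType d1) (Theta : measurableType d2).

Definition pat (Bs : seq (set Theta)) (th : Theta) : seq bool :=
  [seq (th \in B) | B <- Bs].
Definition Bmeas (Bs : seq (set Theta)) := forall i, measurable (nth set0 Bs i).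
Definition Rcl : set (set (Omega * Theta)) :=
  [set X | exists Bs, Bmeas Bs /\ exists S : seq bool -> set Omega,
     (forall p, measurable (S p)) /\ X = [set z | S (pat Bs z.2) z.1]].

Lemma mem_meas (B : set Theta) : measurable B ->
  measurable_fun setT (fun th => th \in B).
Proof.
move=> mB; apply: (measurable_fun_bool true).
rewrite (_ : _ `&` _ = B) //; apply/seteqP; split => x /=.
  by move=> [_ /set_mem].
by move=> Bx; split => //; exact: mem_set.
Qed.

Lemma pat_meas (R : realType) Bs (G : seq bool -> \bar R) : Bmeas Bs ->
  measurable_fun setT (fun th => G (pat Bs th)).
Proof.
elim: Bs G => [|B Bs IH] G mBs /=; first exact: measurable_cst.
have -> : (fun th => G ((th \in B) :: pat Bs th)) =
   (fun th => if th \in B then G (true :: pat Bs th) else G (false :: pat Bs th)).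
  by apply: funext => th; case: (th \in B).
have mBs' : Bmeas Bs by move=> i; exact: (mBs i.+1).
have mB : measurable B := mBs 0%N.
apply: measurable_fun_ifT; first exact: mem_meas.
  exact: (IH (fun p => G (true :: p))).
exact: (IH (fun p => G (false :: p))).
Qed.

Lemma Bmeas_cat Bs Cs : Bmeas Bs -> Bmeas Cs -> Bmeas (Bs ++ Cs).
Proof. by move=> mB mC i; rewrite nth_cat; case: ifP. Qed.

Lemma pat_cat Bs Cs th : pat (Bs ++ Cs) th = pat Bs th ++ pat Cs th.
Proof. exact: map_cat. Qed.

Lemma size_pat Bs th : size (pat Bs th) = size Bs.
Proof. exact: size_map. Qed.

Lemma Rcl_op (op : set Omega -> set Omega -> set Omega) :
  (forall A B, measurable A -> measurable B -> measurable (op A B)) ->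
  forall X Y, Rcl X -> Rcl Y ->
  Rcl [set z | op [set x | X (x, z.2)] [set x | Y (x, z.2)] z.1].
Proof.
move=> mop X Y [Bs [mBs [S [mS ->]]]] [Cs [mCs [T [mT ->]]]].
exists (Bs ++ Cs); split; first exact: Bmeas_cat.
exists (fun p => op (S (take (size Bs) p)) (T (drop (size Bs) p))); split.
  by move=> p; apply: mop.
apply/seteqP; split => z /=; rewrite pat_cat take_size_cat ?size_pat //;
  by rewrite drop_size_cat ?size_pat.
Qed.

Lemma Rcl_setring : setring Rcl.
Proof.
split.
- exists [::]; split; first by move=> i; rewrite nth_nil.
  exists (fun _ => set0); split => //.
- move=> X Y RX RY; have := @Rcl_op setU (fun A B => @measurableU _ Omega A B) X Y RX RY.
  suff -> : X `|` Y = [set z | ([set x | X (x, z.2)] `|` [set x | Y (x, z.2)]) z.1] by [].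
  by apply/seteqP; split => -[x y].
- move=> X Y RX RY; have := @Rcl_op setD (fun A B => @measurableD _ Omega A B) X Y RX RY.
  suff -> : X `\` Y = [set z | ([set x | X (x, z.2)] `\` [set x | Y (x, z.2)]) z.1] by [].
  by apply/seteqP; split => -[x y].
Qed.

Lemma Rcl_setX (A : set Omega) (B : set Theta) :
  measurable A -> measurable B -> Rcl (A `*` B).
Proof.
move=> mA mB; exists [:: B]; split.
  by case=> [|i] //=; rewrite nth_nil.
exists (fun p => if p is true :: _ then A else set0); split.
  by move=> [|[] p].
apply/seteqP; split => -[x y] /=.
  by move=> [Ax By]; rewrite mem_set.
by case: ifPn => // /set_mem By Ax.
Qed.

Lemma Rcl_setT : Rcl setT.
Proof.
exists [::]; split; first by move=> i; rewrite nth_nil.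
by exists (fun _ => setT); split.
Qed.

Lemma prod_sub_sr (X : set (Omega * Theta)) : measurable X -> <<sr Rcl>> X.
Proof.
rewrite measurable_prod_measurableType; apply: (smallest_sub (X := <<sr Rcl>>)).
  have [h0 hD hU] := smallest_sigma_ring Rcl.
  split => //; move=> A GA; apply: hD => //; apply: sub_g_sigma_ring.
  exact: Rcl_setT.
move=> _ [A mA] [B mB] <-; apply: sub_g_sigma_ring; exact: Rcl_setX.
Qed.

Lemma sr_sect (X : set (Omega * Theta)) : <<sr Rcl>> X ->
  forall th, measurable [set x | X (x, th)].
Proof.
apply: (smallest_sub (X := [set X : set (Omega * Theta) | forall th, measurable [set x | X (x, th)]])).
  split.
  - by move=> th; exact: measurable0.
  - move=> A B mA mB th.
    rewrite (_ : [set x | _] = [set x | A (x, th)] `\` [set x | B (x, th)]).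
      exact: measurableD.
    by apply/seteqP; split.
  - move=> F mF th.
    rewrite (_ : [set x | _] = \bigcup_k [set x | F k (x, th)]).
      by apply: bigcupT_measurable => k; exact: mF.
    by apply/seteqP; split.
move=> _ [Bs [mBs [S [mS ->]]]] th; exact: (mS (pat Bs th)).
Qed.

End Rect.
Arguments pat {d2 Theta}.
Arguments Bmeas {d2 Theta}.
Arguments Rcl {d1 d2 Omega Theta}.
Arguments pat_meas {d2 Theta R Bs} G.
Arguments Rcl_setring {d1 d2 Omega Theta}.
Arguments sr_sect {d1 d2 Omega Theta X}.
Arguments prod_sub_sr {d1 d2 Omega Theta X}.
Arguments Bmeas_cat {d2 Theta Bs Cs}.

Lemma indic_le {T1 T2 : Type} (R : realType) (A : set T1) (B : set T2) x y :
  (A x -> B y) -> (\1_A x <= \1_B y :> R)%R.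
Proof.
move=> AB; rewrite !indicE; have [Ax|nAx] := pselect (A x).
  by rewrite mem_set // mem_set //; exact: AB.
by rewrite (memNset nAx) ler0n.
Qed.

Lemma indic_congr {T1 T2 : Type} (R : realType) (A : set T1) (B : set T2) x y :
  (A x <-> B y) -> (\1_A x = \1_B y :> R)%R.
Proof.
move=> [AB BA]; apply/eqP; rewrite eq_le; apply/andP; split; exact: indic_le.
Qed.

Section Main.
Context (R : realType) (d1 d2 : measure_display) (Omega : measurableType d1)
  (Theta : measurableType d2)
  (mu : {measure set Omega -> \bar R}) (rho : (Omega -> \bar R) -> \bar R).
Hypothesis Hq : is_function_quasinorm mu rho.
Hypothesis HF : has_Fatou rho.
Hypothesis Hac : loc_abs_cont mu rho.
Variable E : set Omega.
Hypothesis mE : measurable E.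
Hypothesis muE : mu E < +oo.

Definition Fsum (a : nat -> R) (D : nat -> set (Omega * Theta)) (n : nat)
  (th : Theta) : Omega -> \bar R :=
  fun x => (\sum_(0 <= i < n) a i * \1_(D i `&` (E `*` setT)) (x, th))%R%:E.

Lemma L0p_Fsum a D n th : (forall i, 0 <= a i)%R ->
  (forall i, measurable [set x | D i (x, th)]) -> L0p (Fsum a D n th).
Proof.
move=> a0 mD; split; last first.
  move=> x; rewrite lee_fin; apply: sumr_ge0 => i _; apply: mulr_ge0 => //.
  idtac.
apply/measurable_EFinP; apply: measurable_sum => i.
apply: measurable_funM; first exact: measurable_cst.
rewrite (_ : (fun x => _) = \1_([set x | D i (x, th)] `&` E)).
  by apply: measurable_indic; exact: measurableI.
apply: funext => x; apply: indic_congr; split.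
  by move=> [? [? _]]; split.
by move=> [? ?]; split.
Qed.

Lemma Fsum_le a D D' n th x : (forall i, 0 <= a i)%R ->
  (forall i, D i (x, th) -> D' i (x, th)) -> Fsum a D n th x <= Fsum a D' n th x.
Proof.
move=> a0 DD; rewrite lee_fin; apply: ler_sum => i _; apply: ler_wpM2l => //.
by apply: indic_le => -[? ?]; split => //; exact: DD.
Qed.

Lemma Fsum_eq a D D' n th x :
  (forall i, D i (x, th) <-> D' i (x, th)) -> Fsum a D n th x = Fsum a D' n th x.
Proof.
move=> DD; congr EFin; apply: eq_bigr => i _; congr (_ * _)%R.
by apply: indic_congr; split => -[? ?]; split => //; apply/DD.
Qed.

Lemma Fsum_le_ind a D n th x : (forall i, 0 <= a i)%R ->
  (\sum_(0 <= i < n) a i <= 1)%R -> Fsum a D n th x <= eindic E x.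
Proof.
move=> a0 a1; rewrite /eindic lee_fin.
apply: (@le_trans _ _ (\sum_(0 <= i < n) a i * \1_E x)%R).
  apply: ler_sum => i _; apply: ler_wpM2l => //.
  by apply: indic_le => -[_ []].
rewrite -mulr_suml; apply: ler_piMl => //; by rewrite indicE ler0n.
Qed.


Definition upd (D : nat -> set (Omega * Theta)) (k : nat) (X : set (Omega * Theta)) :=
  fun i => if i == k then X else D i.

Lemma base_rep (a : nat -> R) (D : nat -> set (Omega * Theta)) n : (forall i, Rcl (D i)) ->
  exists Bs, Bmeas Bs /\ exists H : seq bool -> Omega -> R, forall th x,
    (\sum_(0 <= i < n) a i * \1_(D i `&` (E `*` setT)) (x, th))%R = H (pat Bs th) x.
Proof.
move=> RD; elim: n => [|n [Bs [mBs [H HE]]]].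
  exists [::]; split; first by move=> i; rewrite nth_nil.
  by exists (fun _ _ => 0%R) => th x; rewrite big_geq.
have [Cs [mCs [S [mS DnE]]]] := RD n.
exists (Bs ++ Cs); split; first exact: Bmeas_cat.
exists (fun p x => H (take (size Bs) p) x +
   a n * \1_(S (drop (size Bs) p) `&` E) x)%R => th x.
rewrite big_nat_recr //= HE pat_cat take_size_cat ?size_pat //.
rewrite drop_size_cat ?size_pat //; congr (_ + _ * _)%R.
by apply: indic_congr; rewrite DnE; split; [move=> [? [? _]]; split|move=> [? ?]; split].
Qed.

Lemma Qk (a : nat -> R) n : (forall i, 0 <= a i)%R ->
  (\sum_(0 <= i < n) a i <= 1)%R ->
  forall k (D : nat -> set (Omega * Theta)), (forall i, <<sr Rcl>> (D i)) -> (forall i, (k <= i)%N -> Rcl (D i)) ->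
  measurable_fun setT (fun th => rho (Fsum a D n th)).
Proof.
move=> a0 a1; elim=> [|k IH] D srD RD.
  have [Bs [mBs [H HE]]] := base_rep a D n (fun i => RD i isT).
  rewrite (_ : (fun th => _) = (fun th => (fun p => rho (fun x => (H p x)%:E)) (pat Bs th))).
    exact: (pat_meas (fun p => rho (fun x => (H p x)%:E)) mBs).
  by apply: funext => th; congr rho; apply: funext => x; rewrite /Fsum HE.
pose M := [set X | <<sr Rcl>> X /\
  measurable_fun setT (fun th => rho (Fsum a (upd D k X) n th))].
have L0pu X th : <<sr Rcl>> X -> L0p (Fsum a (upd D k X) n th).
  move=> sX; apply: L0p_Fsum => // i; apply: sr_sect.
  by rewrite /upd; case: ifP.
have RM : Rcl `<=` M.
  move=> X RX; split; first exact: sub_g_sigma_ring.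
  apply: IH.
    by move=> i; rewrite /upd; case: ifP => // _; exact: sub_g_sigma_ring.
  move=> i ki; rewrite /upd; case: ifPn => // ik; apply: RD.
  by rewrite ltn_neqAle eq_sym ik.
have mM : monotone M.
  split.
  - move=> F ndF MF; split.
      by apply: (g_sigma_ring_monotone Rcl).1 => // i; exact: (MF i).1.
    apply: (emeasurable_fun_cvg (fun m th => rho (Fsum a (upd D k (F m)) n th))).
      by move=> m; exact: (MF m).2.
    move=> th _; apply: (rho_nd_lim Hq HF).
    + by move=> m; apply: L0pu; exact: (MF m).1.
    + apply: L0pu; by apply: (g_sigma_ring_monotone Rcl).1 => // i; exact: (MF i).1.
    + move=> x m m' mm'; apply: Fsum_le => // i; rewrite /upd; case: ifP => // _.
      exact/subsetPset/ndF.
    + move=> x; apply: cvg_near_cst.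
      have [[j _ Fj]|nU] := pselect ((\bigcup_j F j) (x, th)).
        exists j => // m /= jm; apply: Fsum_eq => i; rewrite /upd; case: ifP => // _.
        split=> [Fm|_]; first by exists m.
        by apply: (subsetPset _ _ (ndF _ _ jm)).
      apply: nearW => m; apply: Fsum_eq => i; rewrite /upd; case: ifP => // _.
      split=> [Fm|/nU//]; exfalso; apply: nU; by exists m.
  - move=> F niF MF; split.
      by apply: (g_sigma_ring_monotone Rcl).2 => // i; exact: (MF i).1.
    apply: (emeasurable_fun_cvg (fun m th => rho (Fsum a (upd D k (F m)) n th))).
      by move=> m; exact: (MF m).2.
    move=> th _; apply: (rho_ni_lim Hq Hac mE muE).
    + by move=> m; apply: L0pu; exact: (MF m).1.
    + apply: L0pu; by apply: (g_sigma_ring_monotone Rcl).2 => // i; exact: (MF i).1.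
    + move=> x m m' mm'; apply: Fsum_le => // i; rewrite /upd; case: ifP => // _.
      exact/subsetPset/niF.
    + by move=> x; exact: Fsum_le_ind.
    + move=> x; apply: cvg_near_cst.
      have [U|nU] := pselect ((\bigcap_j F j) (x, th)).
        apply: nearW => m; apply: Fsum_eq => i; rewrite /upd; case: ifP => // _.
        by split => // _; exact: U.
      have : ~ (forall j, F j (x, th)) by move=> h; apply: nU => j _; exact: h.
      move=> /existsNP[j nFj].
      exists j => // m /= jm; apply: Fsum_eq => i; rewrite /upd; case: ifP => // _.
      split=> [Fm|Um]; last by exfalso; apply: nFj; exact: Um.
      by exfalso; apply: nFj; exact: (subsetPset _ _ (niF _ _ jm)).
have sub := monotone_setring_sub_g_sigma_ring mM Rcl_setring RM.
have := (sub (D k) (srD k)).2.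
rewrite (_ : upd D k (D k) = D) //; apply: funext => i; rewrite /upd.
by case: eqP => // ->.
Qed.


Lemma core1 (a : nat -> R) n (D : nat -> set (Omega * Theta)) :
  (forall i, 0 <= a i)%R -> (\sum_(0 <= i < n) a i <= 1)%R ->
  (forall i, <<sr Rcl>> (D i)) ->
  measurable_fun setT (fun th => rho (Fsum a D n th)).
Proof.
move=> a0 a1 srD.
pose D' i := if (i < n)%N then D i else set0.
have [R0 _ _] := @Rcl_setring d1 d2 Omega Theta.
have := Qk a n a0 a1 n D'.
rewrite (_ : (fun th => rho (Fsum a D' n th)) = (fun th => rho (Fsum a D n th))).
  apply.
    by move=> i; rewrite /D'; case: ifP => // _; exact: sub_g_sigma_ring.
  by move=> i ni; rewrite /D' ltnNge ni.
apply: funext => th; congr rho; apply: funext => x; rewrite /Fsum; congr EFin.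
by apply: eq_big_nat => i /andP[_ lt]; rewrite /D' lt.
Qed.

Lemma core2 (a : nat -> R) n (D : nat -> set (Omega * Theta)) :
  (forall i, 0 <= a i)%R -> (forall i, <<sr Rcl>> (D i)) ->
  measurable_fun setT (fun th => rho (Fsum a D n th)).
Proof.
move=> a0 srD.
have s0 : (0 <= \sum_(0 <= i < n) a i)%R by apply: sumr_ge0.
pose c := (1 + \sum_(0 <= i < n) a i)%R.
have c0 : (0 < c)%R by rewrite /c; lra.
pose a' i := (a i / c)%R.
have a'0 i : (0 <= a' i)%R by apply: divr_ge0 => //; exact: ltW.
have a'1 : (\sum_(0 <= i < n) a' i <= 1)%R.
  rewrite /a' -mulr_suml ler_pdivrMr // mul1r /c; lra.
have FE th : Fsum a D n th = (fun x => c%:E * Fsum a' D n th x).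
  apply: funext => x; rewrite /Fsum -EFinM mulr_sumr; congr EFin.
  apply: eq_bigr => i _; rewrite /a'; field; exact: lt0r_neq0.
rewrite (_ : (fun th => _) = (fun th => c%:E * rho (Fsum a' D n th))).
  apply: measurable_funeM; exact: core1.
apply: funext => th; rewrite FE.
case: Hq => _ [_ [H1 _]]; apply: H1; first exact: ltW.
by apply: L0p_Fsum => // i; exact: sr_sect.
Qed.

End Main.

Arguments core2 {R d1 d2 Omega Theta mu rho} Hq HF Hac {E} mE muE a n D.
Arguments Fsum {R d1 d2 Omega Theta} E a D n th.

Lemma part_f (R : realType)
  (d1 : measure_display) (Omega : measurableType d1)
  (mu : {measure set Omega -> \bar R})
  (d2 : measure_display) (Theta : measurableType d2)
  (rho : (Omega -> \bar R) -> \bar R)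
  (f : Omega * Theta -> \bar R) :
  sigma_finite setT mu ->
  is_function_quasinorm mu rho -> has_Fatou rho -> loc_abs_cont mu rho ->
  measurable_fun setT f -> (forall z, 0 <= f z) ->
  measurable_fun setT (fun theta : Theta => rho (fun omega => f (omega, theta))).
Proof.
move=> /sigma_finiteP[En [EnU ndE mEn]] Hq HF Hac mf f0.
pose phi : nat -> {nnsfun (Omega * Theta) >-> R} := nnsfun_approx measurableT mf.
pose sq N := finmap.enum_fset (fset_set (range (phi N))).
pose a N i := (sq N)`_i.
pose D N i := phi N @^-1` [set a N i].
pose m N := size (sq N).
have a0 N i : (0 <= a N i)%R.
  rewrite /a; have [lt|ge] := ltnP i (m N); last by rewrite nth_default.
  have := mem_nth 0%R lt; rewrite in_fset_set; last exact: fimfunP.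
  by rewrite inE => -[z _ <-]; exact: fun_ge0.
have srD N i : <<sr Rcl>> (D N i).
  apply: prod_sub_sr; rewrite /D -[X in measurable X]setTI.
  by apply: (measurable_funP (phi N)) => //; exact: measurable_set1.
have FE N th : Fsum (En N) (a N) (D N) (m N) th =
    (fun x => (phi N (x, th) * \1_(En N) x)%:E).
  apply: funext => x; rewrite /Fsum; congr EFin.
  rewrite (fimfunEord (phi N) (x, th)) mulr_suml big_mkord.
  apply: eq_bigr => i _; rewrite -mulrA; congr (_ * _)%R.
  rewrite indicI /= ; congr (_ * _)%R; apply: indic_congr; split.
    by move=> [].
  by move=> ?; split.
pose g N th := rho (fun x => (phi N (x, th) * \1_(En N) x)%:E).
apply: (emeasurable_fun_cvg g).
  move=> N; rewrite /g (_ : (fun th => _) =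
    (fun th => rho (Fsum (En N) (a N) (D N) (m N) th))).
    exact: (core2 Hq HF Hac (mEn N).1 (mEn N).2 (a N) (m N) (D N) (a0 N) (srD N)).
  by apply: funext => th; rewrite FE.
move=> th _; apply: (rho_nd_lim Hq HF).
- move=> N; rewrite -FE; apply: L0p_Fsum; [exact: (mEn N).1|exact: a0|move=> i; exact: sr_sect].
- by split; [exact: measurable_fun_pair1|move=> x; exact: f0].
- move=> x N N' NN'; rewrite lee_fin; apply: ler_pM.
  + exact: fun_ge0.
  + by rewrite indicE ler0n.
  + by have /lefP := nd_nnsfun_approx measurableT mf NN'; apply.
  + by apply: indic_le; apply/subsetPset/ndE.
- move=> x.
  have hc := @cvg_nnsfun_approx _ _ _ setT measurableT f mf (fun z _ => f0 z) (x, th) I.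
  apply: (cvg_trans _ hc); apply: near_eq_cvg.
  have : setT x by [].
  rewrite EnU => -[j _ Ej].
  exists j => // N /= jN.
  rewrite indicE mem_set ?mulr1 //.
  exact: (subsetPset _ _ (ndE _ _ jN)).
Qed.

Theorem proposition3p38 (R : realType)
  (d1 : measure_display) (Omega : measurableType d1)
  (mu : {measure set Omega -> \bar R})
  (d2 : measure_display) (Theta : measurableType d2)
  (nu : {measure set Theta -> \bar R})
  (rho : (Omega -> \bar R) -> \bar R)
  (f : Omega * Theta -> \bar R) (g : Theta * Omega -> \bar R) :
  sigma_finite setT mu -> sigma_finite setT nu ->
  is_function_quasinorm mu rho -> has_Fatou rho -> loc_abs_cont mu rho ->
  measurable_fun setT f -> (forall z, 0 <= f z) ->
  measurable_fun setT g -> (forall z, 0 <= g z) ->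
  measurable_fun setT (fun theta : Theta => rho (fun omega => f (omega, theta))) /\
  measurable_fun setT (fun theta : Theta => rho (fun omega => g (theta, omega))).
Proof.
move=> smu _ Hq HF Hac mf f0 mg g0; split.
  exact: (@part_f R d1 Omega mu d2 Theta rho f smu Hq HF Hac mf f0).
have h := @part_f R d1 Omega mu d2 Theta rho (fun z => g (z.2, z.1)) smu Hq HF Hac
  (measurableT_comp mg (@measurable_swap _ _ Omega Theta)) (fun z => g0 _).
exact: h.
Qed.
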